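(* Let $\zeta:(0,\pi]\to\mathbb R^p$ be continuously differentiable with $\|\zeta(\lambda)\|\le K|\log\lambda|^\ell$ for some $\ell\ge1$ and $\|\partial\zeta(\lambda)/\partial\lambda\|\le K\lambda^{-1}|\log\lambda|^{\ell-1}$ for all $\lambda\in(0,\pi]$, where $K<\infty$. Then, as $T\to\infty$, $$\sup_{\lambda\in[0,\pi]}\Big\|\frac1{\tilde T}\sum_{j=1}^{[\tilde T\lambda/\pi]}\zeta(\lambda_j)-\frac1\pi\int_0^\lambda\zeta(x)\,dx\Big\|\le K'\frac{(\log\tilde T)^\ell}{\tilde T}$$ for some constant $K'<\infty$.
   Context: $T$ is a positive integer (sample size), $\tilde T=[T/2]$ (integer part), and $\lambda_j=2\pi j/T$ are the Fourier frequencies. *)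

(* Defs.v *)
From Stdlib Require Import Reals Lra List.
From Coquelicot Require Import Coquelicot.
Open Scope R_scope.

Definition vnorm (p : nat) (v : nat -> R) : R :=
  sqrt (fold_right Rplus 0 (map (fun k => v k ^ 2) (seq 0 p))).

(* Real power x^y for x >= 0, with the conventions 0^0 = 1, 0^y = 0 (y > 0). *)
Definition pw (x y : R) : R :=
  if Req_EM_T x 0 then (if Req_EM_T y 0 then 1 else 0) else Rpower x y.

Definition Ttil (T : nat) : nat := Nat.div T 2.

Definition lamj (T j : nat) : R := 2 * PI * INR j / INR T.

Definition nsum (T : nat) (lam : R) : nat :=
  Z.to_nat (Int_part (INR (Ttil T) * lam / PI)).

Definition impint (f : R -> R) (lam : R) : R :=
  if Req_EM_T lam 0 then 0 else RInt_gen f (at_right 0) (at_point lam).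

(* Main.v *)
From Stdlib Require Import Reals Lra Lia List ZArith.
From Coquelicot Require Import Coquelicot.
Open Scope R_scope.
Require Import Defs.
Lemma exp_le x y : x <= y -> exp x <= exp y.
Proof. intros h. destruct (Req_dec x y). subst; lra. apply Rlt_le, exp_increasing; lra. Qed.

Definition Ef (l x : R) := exp (l * ln (- ln x)).
Definition Gf (K l x : R) := 2*K*x*Ef l x.
Definition gf (K l x : R) := 2*K*Ef l x*(1 - l/(-ln x)).

Lemma ln_neg x : 0 < x < 1 -> ln x < 0.
Proof. intros [h1 h2]. rewrite <- ln_1; apply ln_increasing; lra. Qed.

Lemma ln_le_sub1 y : 0 < y -> ln y <= y - 1.
Proof. intros hy. pose proof (exp_ineq1_le (ln y)). rewrite exp_ln in H; lra. Qed.

Lemma G_deriv K l x : 0 < x < 1 -> is_derive (Gf K l) x (gf K l x).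
Proof. intros [h1 h2]. unfold Gf, gf, Ef.
assert (hl : ln x < 0) by (apply ln_neg; lra).
auto_derive.
- repeat split; lra.
- field. lra.
Qed.

Lemma g_cont K l x : 0 < x < 1 -> continuous (gf K l) x.
Proof. intros [h1 h2]. apply (ex_derive_continuous (K:=R_AbsRing) (V:=R_NormedModule)). unfold gf, Ef.
assert (hl : ln x < 0) by (apply ln_neg; lra).
auto_derive. repeat split; lra.
Qed.

Lemma delta0_lt1 l : 1 <= l -> exp (-(2*l)) < 1.
Proof. intros. rewrite <- exp_0. apply exp_increasing. lra. Qed.

Lemma small_lnge l x : 1 <= l -> 0 < x <= exp (-(2*l)) -> 2*l <= - ln x.
Proof. intros hl [h1 h2].
assert (ln x <= -(2*l)). { rewrite <- (ln_exp (-(2*l))). apply ln_le; lra. } lra. Qed.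

Lemma g_ge K l x : 0 <= K -> 1 <= l -> 0 < x <= exp (-(2*l)) -> K * Ef l x <= gf K l x.
Proof. intros hK hl hx. pose proof (small_lnge l x hl hx).
unfold gf. assert (0 < Ef l x) by apply exp_pos.
assert (1/2 <= 1 - l / - ln x).
{ assert (l / - ln x <= 1/2). { apply Rmult_le_reg_r with (- ln x). lra.
  field_simplify; lra. } lra. }
assert (0 <= K * Ef l x) by (apply Rmult_le_pos; lra).
nra.
Qed.

Lemma G_nonneg K l x : 0 <= K -> 0 < x -> 0 <= Gf K l x.
Proof. intros. unfold Gf. pose proof (exp_pos (l * ln (- ln x))). unfold Ef.
apply Rmult_le_pos; [|lra]. apply Rmult_le_pos; lra. Qed.

Lemma Gcmp K l F a b : 0 <= K -> 1 <= l -> 0 < a <= b -> b <= exp (-(2*l)) ->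
  (forall t, a <= t <= b -> Rabs (F t) <= K * Ef l t) -> ex_RInt F a b ->
  Rabs (RInt F a b) <= Gf K l b - Gf K l a.
Proof. intros hK hl hab hb hF hex.
pose proof (delta0_lt1 l hl).
assert (hI : is_RInt (gf K l) a b (Gf K l b - Gf K l a)).
{ apply (is_RInt_derive (Gf K l) (gf K l)).
  - intros x hx. rewrite Rmin_left in hx by lra. rewrite Rmax_right in hx by lra.
    apply G_deriv. lra.
  - intros x hx. rewrite Rmin_left in hx by lra. rewrite Rmax_right in hx by lra.
    apply g_cont. lra. }
assert (hexg : ex_RInt (gf K l) a b) by (eexists; exact hI).
assert (hexmg : ex_RInt (fun x => - gf K l x) a b).
{ apply (ex_RInt_opp (V:=R_CompleteNormedModule)) in hexg. exact hexg. }
pose proof (is_RInt_unique _ _ _ _ hI) as hv.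
assert (h1 : RInt F a b <= RInt (gf K l) a b).
{ apply RInt_le; try lra; auto. intros x hx.
  pose proof (hF x ltac:(lra)). pose proof (g_ge K l x hK hl ltac:(lra)).
  apply Rabs_le_between in H0. lra. }
assert (h2 : RInt (fun x => - gf K l x) a b <= RInt F a b).
{ apply RInt_le; try lra; auto. intros x hx.
  pose proof (hF x ltac:(lra)). pose proof (g_ge K l x hK hl ltac:(lra)).
  apply Rabs_le_between in H0. lra. }
rewrite (RInt_opp (V:=R_CompleteNormedModule)) in h2 by exact hexg.
change (RInt (gf K l) a b) with (RInt (gf K l) a b) in h2.
rewrite hv in h1, h2. unfold opp in h2; simpl in h2.
apply Rabs_le. lra.
Qed.
Lemma at_right0_intro (Q : R -> Prop) (d : R) : 0 < d -> (forall y, 0 < y < d -> Q y) -> at_right 0 Q.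
Proof. intros hd H. exists (mkposreal d hd). intros y hy hy0. apply H.
change (Rabs (y - 0) < d) in hy. apply Rabs_lt_between in hy. lra. Qed.

Lemma at_right0_elim (Q : R -> Prop) : at_right 0 Q -> exists d, 0 < d /\ (forall y, 0 < y < d -> Q y).
Proof. intros [d H]. exists d. split. apply cond_pos. intros y hy. apply H.
change (Rabs (y - 0) < d). rewrite Rabs_right; lra. lra. Qed.

Lemma Glim K l : 0 <= K -> 1 <= l -> forall eps, 0 < eps ->
  exists d, 0 < d /\ forall x, 0 < x < d -> Gf K l x < eps.
Proof. intros hK hl eps heps.
set (c := l * (ln (2*l) - 1)).
set (eta := eps / (2*K*exp c + 1)).
assert (hec : 0 < exp c) by apply exp_pos.
assert (heta : 0 < eta). { unfold eta. apply Rdiv_lt_0_compat; nra. }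
exists (Rmin (1/2) (eta*eta)). split. { apply Rmin_glb_lt; nra. }
intros x [hx1 hx2]. assert (hx3 : x < 1/2) by (eapply Rlt_le_trans; [exact hx2| apply Rmin_l]).
assert (hx4 : x < eta*eta) by (eapply Rlt_le_trans; [exact hx2| apply Rmin_r]).
assert (hln : ln x < 0) by (apply ln_neg; lra).
set (u := - ln x).
assert (hu : 0 < u) by (unfold u; lra).
assert (h1 : l * ln u <= u/2 + c).
{ pose proof (ln_le_sub1 (u/(2*l)) ltac:(apply Rdiv_lt_0_compat; lra)).
  rewrite ln_div in H by lra. unfold c.
  assert (l * (ln u - ln (2*l)) <= l * (u / (2*l) - 1)) by (apply Rmult_le_compat_l; lra).
  replace (l * (u / (2*l) - 1)) with (u/2 - l) in H0 by (field; lra). lra. }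
set (y := exp (ln x / 2)).
assert (hy : y * y = x). { unfold y. rewrite <- exp_plus. replace (ln x / 2 + ln x / 2) with (ln x) by field. apply exp_ln; lra. }
assert (hy0 : 0 < y) by apply exp_pos.
assert (hyeta : y < eta) by nra.
assert (hE : x * Ef l x <= exp c * y).
{ unfold Ef. fold u. replace x with (exp (ln x)) at 1 by (apply exp_ln; lra).
  rewrite <- exp_plus. unfold y. rewrite <- exp_plus. apply exp_le. unfold u in *. lra. }
unfold Gf. 
assert (2*K*x*Ef l x <= 2*K*(exp c * y)) by (rewrite Rmult_assoc; apply Rmult_le_compat_l; lra).
assert (2*K*(exp c * y) <= 2*K*exp c*eta) by (rewrite <- Rmult_assoc; apply Rmult_le_compat_l; nra).
assert ((2*K*exp c + 1)*eta = eps) by (unfold eta; field; nra).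
nra.
Qed.

Lemma gen_bound F x L B : 0 < x -> is_RInt_gen F (at_right 0) (at_point x) L ->
  (forall a, 0 < a < x -> ex_RInt F a x /\ Rabs (RInt F a x) <= B) -> Rabs L <= B.
Proof. intros hx hL hB. destruct (Rle_or_lt (Rabs L) B) as [h|h]; auto. exfalso.
assert (he : 0 < Rabs L - B) by lra.
specialize (hL (ball L (mkposreal _ he))). 
assert (hloc : locally L (ball L (mkposreal _ he))) by (apply locally_ball).
specialize (hL hloc). destruct hL as [Q R0 HQ HR HP].
apply at_right0_elim in HQ. destruct HQ as [d [hd HQ]].
set (a := Rmin d x / 2).
assert (ha : 0 < a < x /\ a < d). { pose proof (Rmin_r d x). pose proof (Rmin_l d x).
  pose proof (Rmin_glb_lt d x 0 hd hx). unfold a. lra. }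
destruct (HP a x (HQ a ltac:(lra)) HR) as [y [hy1 hy2]].
simpl in hy1. destruct (hB a ltac:(lra)) as [hex hb].
apply is_RInt_unique in hy1. rewrite hy1 in hb.
change (Rabs (y - L) < Rabs L - B) in hy2.
pose proof (Rabs_triang_inv L y). rewrite Rabs_minus_sym in hy2. lra.
Qed.

Lemma gen_chasles F a b La : is_RInt_gen F (at_right 0) (at_point a) La -> ex_RInt F a b ->
  is_RInt_gen F (at_right 0) (at_point b) (La + RInt F a b).
Proof. intros h1 h2.
apply (is_RInt_gen_Chasles (V:=R_NormedModule) F a). exact h1.
apply is_RInt_gen_at_point. apply (RInt_correct F). exact h2. Qed.

Lemma impint_val F x L : 0 < x -> is_RInt_gen F (at_right 0) (at_point x) L -> impint F x = L.
Proof. intros hx h. unfold impint. destruct (Req_EM_T x 0). lra.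
apply (is_RInt_gen_unique (V:=R_CompleteNormedModule)). exact h. Qed.

Lemma exRInt (F : R -> R) a b : 0 < a -> 0 < b -> (forall x, 0 < x -> continuous F x) -> ex_RInt F a b.
Proof. intros ha hb hc. apply (ex_RInt_continuous (V:=R_CompleteNormedModule)).
intros z hz. apply hc. pose proof (Rmin_glb_lt a b 0 ha hb). lra. Qed.

Lemma exist_gen K l F : 0 <= K -> 1 <= l -> (forall x, 0 < x -> continuous F x) ->
  (forall t, 0 < t <= exp (-(2*l)) -> Rabs (F t) <= K * Ef l t) ->
  exists L, is_RInt_gen F (at_right 0) (at_point (exp (-(2*l)))) L.
Proof. intros hK hl hc hF.
set (x0 := exp (-(2*l))).
assert (hx0 : 0 < x0) by apply exp_pos.
set (A := fun a => RInt F a x0).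
set (FF := filtermap A (at_right 0)).
assert (hp : ProperFilter FF) by (apply filtermap_proper_filter; apply at_right_proper_filter).
assert (hcau : cauchy FF).
{ intros eps. destruct (Glim K l hK hl eps (cond_pos eps)) as [d [hd hG]].
  set (d' := Rmin d x0 / 2).
  assert (hd' : 0 < d' < d /\ d' < x0). { pose proof (Rmin_r d x0). pose proof (Rmin_l d x0).
    pose proof (Rmin_glb_lt d x0 0 hd hx0). unfold d'. lra. }
  exists (A d'). unfold FF, filtermap. apply at_right0_intro with d'. lra.
  intros a ha. change (Rabs (A a - A d') < eps). unfold A.
  assert (hC : RInt F a d' + RInt F d' x0 = RInt F a x0)
    by (apply (RInt_Chasles (V:=R_CompleteNormedModule)); apply exRInt; auto; lra).
  replace (RInt F a x0 - RInt F d' x0) with (RInt F a d') by lra.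
  eapply Rle_lt_trans. apply (Gcmp K l F a d' hK hl).
  - lra.
  - change (d' <= x0); lra.
  - intros t ht. apply hF. change (0 < t <= x0). lra.
  - apply exRInt; auto; lra.
  - pose proof (G_nonneg K l a hK ltac:(lra)). pose proof (hG d' ltac:(lra)). lra. }
pose proof (complete_cauchy FF hp hcau) as H.
exists (lim FF). intros P [eps HP].
apply Filter_prod with (Q := fun a => ball (lim FF) eps (A a) /\ 0 < a < x0) (R := fun b => b = x0).
- apply filter_and. apply H. apply at_right0_intro with x0; auto.
- reflexivity.
- intros a b [ha1 ha2] hb. subst b. exists (A a). split.
  + simpl. apply (RInt_correct F). apply exRInt; auto; lra.
  + apply HP. exact ha1.
Qed.

Definition Fhyp (K l : R) (F dF : R -> R) : Prop :=
  (forall x, 0 < x -> continuous F x) /\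
  (forall x, 0 < x < PI -> is_derive F x (dF x)) /\
  (forall x, 0 < x <= PI -> Rabs (F x) <= K * pw (Rabs (ln x)) l) /\
  (forall x, 0 < x < PI -> Rabs (dF x) <= K / x * pw (Rabs (ln x)) (l-1)).

Lemma pw_pos y e : 0 <= pw y e.
Proof. unfold pw. destruct (Req_EM_T y 0); [destruct (Req_EM_T e 0); lra|].
unfold Rpower. left. apply exp_pos. Qed.

Lemma pw_le y e M : 0 <= y <= M -> 0 < M -> 0 <= e -> pw y e <= Rpower M e.
Proof. intros hy hM he. unfold pw. destruct (Req_EM_T y 0).
- destruct (Req_EM_T e 0). subst. rewrite Rpower_O; lra. unfold Rpower. left; apply exp_pos.
- apply Rle_Rpower_l; lra. Qed.

Lemma pw_pos_eq y e : 0 < y -> pw y e = Rpower y e.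
Proof. intros. unfold pw. destruct (Req_EM_T y 0); [lra|reflexivity]. Qed.

Lemma delta0_lePI l : 1 <= l -> exp (-(2*l)) < PI.
Proof. intros. pose proof (delta0_lt1 l H). pose proof PI_RGT_0. pose proof PI2_1. lra. Qed.

Lemma F_small K l F dF : 1 <= l -> Fhyp K l F dF ->
  forall t, 0 < t <= exp (-(2*l)) -> Rabs (F t) <= K * Ef l t.
Proof. intros hl [hc [hd [hb hdb]]] t ht. pose proof (delta0_lt1 l hl).
pose proof (delta0_lePI l hl).
assert (hln : ln t < 0) by (apply ln_neg; lra).
specialize (hb t ltac:(lra)). rewrite (Rabs_left (ln t)) in hb by lra.
rewrite pw_pos_eq in hb by lra. exact hb. Qed.

Lemma I_is K l F dF : 0 <= K -> 1 <= l -> Fhyp K l F dF ->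
  forall x, 0 < x -> is_RInt_gen F (at_right 0) (at_point x) (impint F x).
Proof. intros hK hl H x hx. pose proof H as [hc _].
destruct (exist_gen K l F hK hl hc (F_small K l F dF hl H)) as [L0 hL0].
pose proof (gen_chasles F _ x L0 hL0 (exRInt F _ x (exp_pos _) hx hc)) as h.
rewrite (impint_val F x _ hx h). exact h. Qed.

Lemma I_chasles K l F dF : 0 <= K -> 1 <= l -> Fhyp K l F dF ->
  forall a b, 0 < a -> 0 < b -> impint F b = impint F a + RInt F a b.
Proof. intros hK hl H a b ha hb. pose proof H as [hc _].
apply impint_val; auto. apply gen_chasles. apply (I_is K l F dF); auto.
apply exRInt; auto. Qed.

Lemma I_small K l F dF : 0 <= K -> 1 <= l -> Fhyp K l F dF ->
  forall x, 0 < x <= exp (-(2*l)) -> Rabs (impint F x) <= Gf K l x.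
Proof. intros hK hl H x hx. pose proof H as [hc _].
apply (gen_bound F x); [lra| apply (I_is K l F dF); auto; lra |].
intros a ha. split. apply exRInt; auto; lra.
eapply Rle_trans. apply (Gcmp K l F a x); auto; try lra.
- intros t ht. apply (F_small K l F dF hl H). lra.
- apply exRInt; auto; lra.
- pose proof (G_nonneg K l a hK ltac:(lra)). lra. Qed.

Lemma G_mono K l F dF : 0 <= K -> 1 <= l -> Fhyp K l F dF ->
  forall a b, 0 < a <= b -> b <= exp (-(2*l)) -> Gf K l a <= Gf K l b.
Proof. intros hK hl H a b hab hb. pose proof H as [hc _].
pose proof (Gcmp K l F a b hK hl hab hb (fun t ht => F_small K l F dF hl H t ltac:(lra))
   (exRInt F a b ltac:(lra) ltac:(lra) hc)). pose proof (Rabs_pos (RInt F a b)). lra. Qed.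

Lemma lnbound h Nr x : 0 < h -> 1/h <= Nr -> 2 <= ln Nr -> h <= x <= PI -> Rabs (ln x) <= 2 * ln Nr.
Proof. intros hh hN hl hx. pose proof PI_4.
assert (h1 : ln h <= ln x) by (apply ln_le; lra).
assert (h2 : ln (/ h) <= ln Nr) by (apply ln_le; [apply Rinv_0_lt_compat; lra| unfold Rdiv in hN; lra]).
rewrite ln_Rinv in h2 by lra.
pose proof (ln_le_sub1 x ltac:(lra)).
apply Rabs_le. lra. Qed.

Lemma B1 K l F dF h Nr x : 0 <= K -> 1 <= l -> Fhyp K l F dF -> 0 < h -> 1/h <= Nr -> 2 <= ln Nr ->
  h <= x <= PI -> Rabs (F x) <= K * Rpower (2 * ln Nr) l.
Proof. intros hK hl [hc [hd [hb hdb]]] hh hN hlN hx.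
eapply Rle_trans. apply hb; lra. apply Rmult_le_compat_l; auto.
apply pw_le; try lra. split. apply Rabs_pos. eapply lnbound; eauto. Qed.

Lemma B2 K l F dF h Nr x : 0 <= K -> 1 <= l -> Fhyp K l F dF -> 0 < h -> 1/h <= Nr -> 2 <= ln Nr ->
  h <= x < PI -> Rabs (dF x) <= K / x * Rpower (2 * ln Nr) (l - 1).
Proof. intros hK hl [hc [hd [hb hdb]]] hh hN hlN hx.
eapply Rle_trans. apply hdb; lra. apply Rmult_le_compat_l.
apply Rmult_le_pos; auto. left; apply Rinv_0_lt_compat; lra.
apply pw_le; try lra. split. apply Rabs_pos. eapply lnbound; eauto; lra. Qed.

Lemma B3 K l h Nr x : 0 <= K -> 1 <= l -> 0 < h -> 1/h <= Nr -> 2 <= ln Nr ->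
  h <= x <= exp (-(2*l)) -> Gf K l x <= 2 * K * x * Rpower (2 * ln Nr) l.
Proof. intros hK hl hh hN hlN hx. pose proof (delta0_lt1 l hl). pose proof (delta0_lePI l hl).
assert (hln : ln x < 0) by (apply ln_neg; lra).
unfold Gf. apply Rmult_le_compat_l. apply Rmult_le_pos; lra.
change (Ef l x) with (Rpower (- ln x) l). apply Rle_Rpower_l. lra. split. lra.
pose proof (lnbound h Nr x hh hN hlN ltac:(lra)). rewrite Rabs_left in H1 by lra. lra. Qed.

Lemma cell K l F dF h Nr a : 0 <= K -> 1 <= l -> Fhyp K l F dF -> 0 < h -> 1/h <= Nr -> 2 <= ln Nr ->
  h <= a -> a + h <= PI ->
  Rabs (h * F (a + h) - RInt F a (a + h)) <= h * h * (K / a * Rpower (2 * ln Nr) (l - 1)).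
Proof. intros hK hl H hh hN hlN ha hb. pose proof H as [hc [hd [hbd hdb]]].
set (b := a + h). set (Bd := K / a * Rpower (2 * ln Nr) (l - 1)).
assert (hBd : 0 <= Bd). { unfold Bd. apply Rmult_le_pos. apply Rmult_le_pos; auto.
  left; apply Rinv_0_lt_compat; lra. left; unfold Rpower; apply exp_pos. }
set (D := fun x => if Rlt_dec x PI then dF x else 0).
assert (hcl : forall t, a <= t <= b -> Rabs (F b - F t) <= h * Bd).
{ intros t ht.
  destruct (MVT_gen F t b D) as [c [hc1 hc2]].
  - intros x hx. rewrite Rmin_left in hx by lra. rewrite Rmax_right in hx by lra.
    unfold D. destruct (Rlt_dec x PI). apply hd. lra. exfalso; unfold b in *; lra.
  - intros x hx. rewrite Rmin_left in hx by lra. rewrite Rmax_right in hx by lra.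
    apply continuity_pt_filterlim. apply hc. lra.
  - rewrite Rmin_left in hc1 by lra. rewrite Rmax_right in hc1 by lra.
    rewrite hc2. rewrite Rabs_mult. rewrite (Rabs_right (b - t)) by lra.
    assert (Rabs (D c) <= Bd).
    { unfold D. destruct (Rlt_dec c PI).
      - eapply Rle_trans. apply (B2 K l F dF h Nr c); auto; lra.
        unfold Bd. apply Rmult_le_compat_r. left; unfold Rpower; apply exp_pos.
        unfold Rdiv. apply Rmult_le_compat_l; auto. apply Rinv_le_contravar; lra.
      - rewrite Rabs_R0. exact hBd. }
    assert (0 <= b - t <= h) by (unfold b in *; lra).
    pose proof (Rabs_pos (D c)). nra. }
assert (hR : RInt (fun t => F b - F t) a b = h * F b - RInt F a b).
{ pose proof (RInt_minus (V:=R_CompleteNormedModule) (fun _ => F b) F a b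
    (ex_RInt_const _ _ _) (exRInt F a b ltac:(lra) ltac:(unfold b; lra) hc)) as e.
  transitivity (minus (RInt (fun _ => F b) a b) (RInt F a b)). exact e.
  rewrite RInt_const. unfold minus, plus, opp, scal; simpl. unfold mult; simpl. unfold b; ring. }
rewrite <- hR.
eapply Rle_trans. apply abs_RInt_le_const. unfold b; lra.
apply (ex_RInt_minus (V:=R_NormedModule)). apply ex_RInt_const. apply exRInt; auto; unfold b; lra.
exact hcl. unfold b. replace (a + h - a) with h by ring. nra. Qed.

Lemma harm x : 1 <= x -> 1 / x <= 2 * (ln (x + 1) - ln x).
Proof. intros hx. set (y := 1 / x).
assert (hy : 0 < y <= 1). { unfold y. split. apply Rdiv_lt_0_compat; lra.
  apply Rmult_le_reg_r with x; [lra|]. field_simplify; lra. }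
assert (he : exp (y/2) <= 1 + y).
{ pose proof (exp_ineq1_le (- (y/2))). 
  assert (exp (y/2) * exp (-(y/2)) = 1) by (rewrite <- exp_plus; replace (y/2 + -(y/2)) with 0 by ring; apply exp_0).
  pose proof (exp_pos (y/2)). nra. }
assert (y / 2 <= ln (1 + y)).
{ rewrite <- (ln_exp (y/2)). apply ln_le. apply exp_pos. exact he. }
assert (ln (x + 1) - ln x = ln (1 + y)).
{ rewrite <- ln_div by lra. f_equal. unfold y. field. lra. }
lra. Qed.

Definition Ssum (F : R -> R) (h : R) (n : nat) : R := sum_n_m (fun j => F (INR j * h)) 1 n.

Lemma induct K l F dF h Nr : 0 <= K -> 1 <= l -> Fhyp K l F dF -> 0 < h -> 1/h <= Nr -> 2 <= ln Nr ->
  h <= exp (-(2*l)) ->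
  forall n : nat, (1 <= n)%nat -> INR n * h <= PI ->
  Rabs (h * Ssum F h n - impint F (INR n * h)) <=
     h * (K * Rpower (2 * ln Nr) l) + Gf K l h + 2 * h * K * Rpower (2 * ln Nr) (l - 1) * ln (INR n)
  /\ Rabs (Ssum F h n) <= INR n * (K * Rpower (2 * ln Nr) l).
Proof. intros hK hl H hh hN hlN hd0.
set (ML := K * Rpower (2 * ln Nr) l). set (R1 := Rpower (2 * ln Nr) (l - 1)).
assert (hR1 : 0 <= R1) by (left; unfold R1, Rpower; apply exp_pos).
induction n as [|m IH]; intros hn hmp. lia.
destruct m as [|m].
- unfold Ssum. rewrite sum_n_n. change (INR 1) with 1 in *. rewrite ln_1.
  replace (1 * h) with h by ring. replace (1 * h) with h in hmp by ring.
  pose proof (B1 K l F dF h Nr h hK hl H hh hN hlN ltac:(lra)) as hb.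
  pose proof (I_small K l F dF hK hl H h ltac:(lra)) as hi. fold ML in hb. split.
  + eapply Rle_trans. apply Rabs_triang. rewrite Rabs_Ropp, Rabs_mult, (Rabs_right h) by lra.
    assert (h * Rabs (F h) <= h * ML) by (apply Rmult_le_compat_l; lra). lra.
  + lra.
- remember (S m) as m1 eqn:Hm1. assert (hm1 : 1 <= INR m1) by (rewrite Hm1, S_INR; pose proof (pos_INR m); lra).
  assert (hS : INR (S m1) = INR m1 + 1) by apply S_INR.
  rewrite hS in hmp.
  assert (hmp' : INR m1 * h <= PI) by nra.
  destruct (IH ltac:(lia) hmp') as [IH1 IH2].
  assert (hsum : Ssum F h (S m1) = Ssum F h m1 + F ((INR m1 + 1) * h)).
  { unfold Ssum. rewrite sum_n_Sm by lia. rewrite S_INR. reflexivity. }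
  set (a := INR m1 * h).
  assert (ha : h <= a) by (unfold a; nra).
  assert (hx : (INR m1 + 1) * h = a + h) by (unfold a; ring).
  rewrite hS, hsum, hx.
  rewrite hx in hmp.
  assert (hI : impint F (a + h) = impint F a + RInt F a (a + h))
    by (apply (I_chasles K l F dF); auto; lra).
  pose proof (cell K l F dF h Nr a hK hl H hh hN hlN ha hmp) as hc. fold R1 in hc.
  pose proof (B1 K l F dF h Nr (a + h) hK hl H hh hN hlN ltac:(lra)) as hb. fold ML in hb.
  split.
  + rewrite hI.
    replace (h * (Ssum F h m1 + F (a + h)) - (impint F a + RInt F a (a + h)))
      with ((h * Ssum F h m1 - impint F a) + (h * F (a + h) - RInt F a (a + h))) by ring.
    eapply Rle_trans. apply Rabs_triang.
    assert (hc2 : h * h * (K / a * R1) <= 2 * h * K * R1 * (ln (INR m1 + 1) - ln (INR m1))).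
    { pose proof (harm (INR m1) hm1) as hh1.
      replace (h * h * (K / a * R1)) with (h * K * R1 * (1 / INR m1)) by (unfold a; field; lra).
      assert (0 <= h * K * R1) by (apply Rmult_le_pos; [apply Rmult_le_pos|]; lra).
      nra. }
    fold a in IH1. lra.
  + eapply Rle_trans. apply Rabs_triang. lra.
Qed.

Lemma T_split T : exists r, (r <= 1)%nat /\ T = (2 * Ttil T + r)%nat.
Proof. unfold Ttil. exists (T mod 2). pose proof (Nat.div_mod T 2 ltac:(lia)).
pose proof (Nat.mod_upper_bound T 2 ltac:(lia)). lia. Qed.

Lemma nsum_prop T lam : 0 <= lam <= PI ->
  INR (nsum T lam) <= INR (Ttil T) * lam / PI < INR (nsum T lam) + 1.
Proof. intros hl. unfold nsum. set (r := INR (Ttil T) * lam / PI).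
assert (hr : 0 <= r). { unfold r. pose proof (pos_INR (Ttil T)). pose proof PI_RGT_0.
  apply Rmult_le_pos. apply Rmult_le_pos; lra. left; apply Rinv_0_lt_compat; lra. }
destruct (base_Int_part r) as [h1 h2].
assert (hz : (0 <= Int_part r)%Z). { assert (-1 < Int_part r)%Z by (apply lt_IZR; simpl; lra). lia. }
rewrite INR_IZR_INZ, Z2Nat.id by exact hz. lra. Qed.

Lemma ln9 : 2 <= ln 9.
Proof. assert (exp 2 <= 9). { replace 2 with (1 + 1) by ring. rewrite exp_plus. pose proof exp_le_3.
  pose proof (exp_pos 1). nra. }
rewrite <- (ln_exp 2). apply ln_le. apply exp_pos. exact H. Qed.

Lemma coreF K l F dF T lam : 0 <= K -> 1 <= l -> Fhyp K l F dF ->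
  PI * exp (2*l) + 9 <= INR (Ttil T) -> 0 <= lam <= PI ->
  Rabs (/ INR (Ttil T) * sum_n_m (fun j => F (lamj T j)) 1 (nsum T lam) - / PI * impint F lam)
  <= 7 * (K * Rpower (2 * ln (INR (Ttil T))) l) / INR (Ttil T).
Proof. intros hK hl H hN hlam.
pose proof PI_RGT_0 as hpi. pose proof PI2_3_2 as hpi3. pose proof PI_4 as hpi4.
pose proof (exp_pos (2*l)) as he2l.
pose proof (nsum_prop T lam hlam) as hns.
destruct (T_split T) as [r [hr hT]].
set (N := Ttil T) in *. set (n := nsum T lam) in *.
set (Nr := INR N) in *.
assert (hNr : 9 <= Nr). { assert (0 <= PI * exp (2*l)) by nra. lra. }
set (Tr := INR T).
assert (hTr : 2 * Nr <= Tr <= 2 * Nr + 1).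
{ unfold Tr. rewrite hT. rewrite plus_INR, mult_INR. fold Nr.
  destruct r as [|[|r]]; [simpl; lra | simpl; lra | lia]. }
set (h := 2 * PI / Tr).
assert (hh : 0 < h) by (unfold h; apply Rdiv_lt_0_compat; lra).
assert (hhN : h <= PI / Nr). { unfold h. apply Rmult_le_reg_r with (Tr * Nr). nra.
  field_simplify; try lra; try nra. }
assert (h1h : 1 / h <= Nr). { unfold h. replace (1 / (2 * PI / Tr)) with (Tr / (2 * PI)) by (field; lra).
  apply Rmult_le_reg_r with (2 * PI). lra. field_simplify; try lra; try nra. }
assert (hlnN : 2 <= ln Nr). { eapply Rle_trans. apply ln9. apply ln_le; lra. }
set (d0 := exp (-(2*l))).
assert (hd0pi : PI / Nr <= d0).
{ unfold d0. rewrite exp_Ropp. apply Rmult_le_reg_r with (Nr * exp (2*l)). nra.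
  field_simplify; try lra; try nra. }
assert (hhd0 : h <= d0) by lra.
assert (hlamj : forall j, lamj T j = INR j * h) by (intros j; unfold lamj, h; fold Tr; field; lra).
set (M := 2 * ln Nr).
set (Q := K * Rpower M l).
assert (hQ : 0 <= Q) by (unfold Q, Rpower; pose proof (exp_pos (l * ln M)); nra).
rewrite (sum_n_m_ext _ (fun j => F (INR j * h))) by (intros; rewrite hlamj; reflexivity).
change (sum_n_m (fun j => F (INR j * h)) 1 n) with (Ssum F h n).
assert (hfin : 0 <= 7 * Q / Nr) by (apply Rmult_le_pos; [lra| left; apply Rinv_0_lt_compat; lra]).
destruct n as [|n'] eqn:En.
-
  unfold Ssum. rewrite sum_n_m_zero by lia. change (zero (G:=R_AbelianMonoid)) with 0.
  destruct (Req_dec lam 0) as [hl0|hl0].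
  + subst lam. unfold impint. destruct (Req_EM_T 0 0); [|lra].
    replace (/ Nr * 0 - / PI * 0) with 0 by ring. rewrite Rabs_R0. exact hfin.
  + assert (hlamN : lam < PI / Nr).
    { simpl in hns. apply Rmult_lt_reg_r with (Nr / PI). apply Rdiv_lt_0_compat; lra.
      replace (PI / Nr * (Nr / PI)) with 1 by (field; lra).
      replace (lam * (Nr / PI)) with (Nr * lam / PI) by (field; lra). lra. }
    pose proof (I_small K l F dF hK hl H lam ltac:(fold d0; lra)) as hi.
    pose proof (G_mono K l F dF hK hl H lam (PI / Nr) ltac:(lra) hd0pi) as hg.
    pose proof (B3 K l h Nr (PI / Nr) hK hl hh h1h hlnN ltac:(fold d0; lra)) as hb3.
    fold M in hb3.
    replace (/ Nr * 0 - / PI * impint F lam) with (- (/ PI * impint F lam)) by ring.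
    rewrite Rabs_Ropp, Rabs_mult, Rabs_right by (left; apply Rinv_0_lt_compat; lra).
    assert (hx : 2 * K * (PI / Nr) * Rpower M l = PI * (2 * Q / Nr)) by (unfold Q; field; lra).
    assert (Rabs (impint F lam) <= PI * (2 * Q / Nr)) by lra.
    apply Rmult_le_reg_l with PI; [lra|].
    rewrite <- Rmult_assoc, Rinv_r, Rmult_1_l by lra.
    assert (0 <= Q / Nr) by (apply Rmult_le_pos; [lra| left; apply Rinv_0_lt_compat; lra]).
    unfold Rdiv in *. nra.
-
  rewrite <- En in *.
  assert (hn1 : (1 <= n)%nat) by lia.
  assert (hn1r : 1 <= INR n) by (apply (le_INR 1); lia).
  assert (hc0 : 2 * Nr / Tr <= 1) by (apply Rmult_le_reg_r with Tr; [lra|]; field_simplify; lra).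
  assert (hkey : Nr * lam / PI * h = lam * (2 * Nr / Tr)) by (unfold h; field; lra).
  set (x := INR n * h).
  assert (hxl : x <= lam).
  { unfold x. assert (INR n * h <= Nr * lam / PI * h) by (apply Rmult_le_compat_r; lra).
    rewrite hkey in H0. assert (lam * (2 * Nr / Tr) <= lam * 1) by (apply Rmult_le_compat_l; lra). lra. }
  assert (hlx : lam - x <= 2 * h).
  { unfold x. assert ((Nr * lam / PI - 1) * h <= INR n * h) by (apply Rmult_le_compat_r; lra).
    assert (lam * (1 - 2 * Nr / Tr) <= h).
    { replace (lam * (1 - 2 * Nr / Tr)) with (lam * (Tr - 2 * Nr) / Tr) by (field; lra).
      unfold h. apply Rmult_le_reg_r with Tr. lra. field_simplify; try lra; try nra. }
    replace ((Nr * lam / PI - 1) * h) with (Nr * lam / PI * h - h) in H0 by ring.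
    rewrite hkey in H0. nra. }
  assert (hxh : h <= x) by (unfold x; nra).
  assert (hxp : x <= PI) by lra.
  destruct (induct K l F dF h Nr hK hl H hh h1h hlnN hhd0 n hn1 hxp) as [I1 I2].
  fold M Q x in I1, I2.
  pose proof (B3 K l h Nr h hK hl hh h1h hlnN ltac:(fold d0; lra)) as hG. fold M in hG.
  assert (hnN : INR n <= Nr). { assert (Nr * lam / PI <= Nr).
    { apply Rmult_le_reg_r with PI. lra. field_simplify; try lra; try nra. } lra. }
  assert (hlnn : ln (INR n) <= ln Nr) by (apply ln_le; lra).
  assert (hM : 0 < M) by (unfold M; lra).
  assert (hRM : Rpower M (l - 1) * M = Rpower M l).
  { rewrite <- (Rpower_1 M) at 2 by lra. rewrite <- Rpower_plus. f_equal. ring. }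
  assert (hR1 : 0 <= Rpower M (l - 1)) by (left; unfold Rpower; apply exp_pos).
  assert (h2 : 2 * h * K * Rpower M (l - 1) * ln (INR n) <= h * Q).
  { assert (0 <= 2 * h * K * Rpower M (l - 1)) by (apply Rmult_le_pos; [|lra]; apply Rmult_le_pos; lra).
    assert (2 * h * K * Rpower M (l - 1) * ln (INR n) <= 2 * h * K * Rpower M (l - 1) * ln Nr)
      by (apply Rmult_le_compat_l; lra).
    assert (2 * h * K * Rpower M (l - 1) * ln Nr = h * Q) by (unfold Q; rewrite <- hRM; unfold M; ring).
    lra. }
  assert (hGQ : Gf K l h <= 2 * h * Q) by (unfold Q; lra).
  assert (I1' : Rabs (h * Ssum F h n - impint F x) <= 4 * h * Q) by lra.
  assert (hI : impint F lam = impint F x + RInt F x lam) by (apply (I_chasles K l F dF); auto; lra).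
  assert (hRI : Rabs (RInt F x lam) <= (lam - x) * Q).
  { apply abs_RInt_le_const. lra. apply exRInt; try lra. destruct H as [hc _]; exact hc.
    intros t ht. apply (B1 K l F dF h Nr t hK hl H hh h1h hlnN). lra. }
  assert (hRI' : Rabs (RInt F x lam) <= 2 * h * Q) by nra.
  set (S := Ssum F h n) in *. set (Ix := impint F x) in *. set (Rr := RInt F x lam) in *.
  set (c := Tr / (2 * Nr) - 1).
  assert (hc : 0 <= c <= 1 / (2 * Nr)).
  { unfold c. split. apply Rmult_le_reg_r with (2 * Nr). lra. field_simplify; lra.
    apply Rmult_le_reg_r with (2 * Nr). lra. field_simplify; lra. }
  assert (hid : / Nr * S - / PI * impint F lam = / PI * (c * (h * S) + (h * S - Ix) - Rr)).
  { rewrite hI. fold Ix Rr. unfold c, h. field. lra. }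
  rewrite hid. rewrite Rabs_mult, (Rabs_right (/ PI)) by (left; apply Rinv_0_lt_compat; lra).
  assert (hS : Rabs (h * S) <= PI * Q).
  { rewrite Rabs_mult, (Rabs_right h) by lra. assert (h * Rabs S <= h * (INR n * Q)) by (apply Rmult_le_compat_l; lra).
    assert (h * (INR n * Q) = x * Q) by (unfold x; ring). nra. }
  assert (hA : Rabs (c * (h * S) + (h * S - Ix) - Rr) <= 1 / (2 * Nr) * (PI * Q) + 6 * h * Q).
  { eapply Rle_trans. apply Rabs_triang. rewrite Rabs_Ropp.
    eapply Rle_trans. apply Rplus_le_compat_r. apply Rabs_triang.
    rewrite Rabs_mult, (Rabs_right c) by lra.
    assert (c * Rabs (h * S) <= 1 / (2 * Nr) * (PI * Q)).
    { apply Rmult_le_compat; try lra. apply Rabs_pos. }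
    lra. }
  assert (h6 : 6 * h * Q <= 6 * (PI / Nr) * Q) by nra.
  apply Rmult_le_reg_l with PI; [lra|].
  rewrite <- Rmult_assoc, Rinv_r, Rmult_1_l by lra.
  assert (1 / (2 * Nr) * (PI * Q) + 6 * (PI / Nr) * Q <= PI * (7 * Q / Nr)).
  { assert (0 <= PI * Q / Nr) by (apply Rmult_le_pos; [nra| left; apply Rinv_0_lt_compat; lra]).
    replace (1 / (2 * Nr) * (PI * Q) + 6 * (PI / Nr) * Q) with (13/2 * (PI * Q / Nr)) by (field; lra).
    replace (PI * (7 * Q / Nr)) with (7 * (PI * Q / Nr)) by (field; lra). lra. }
  lra.
Qed.

Lemma sumsq_ge (v : nat -> R) s p k : (s <= k < s + p)%nat ->
  v k ^ 2 <= fold_right Rplus 0 (map (fun k => v k ^ 2) (seq s p)).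
Proof. revert s. induction p as [|p IH]; intros s hk. lia. cbn [seq map fold_right].
assert (hnn : forall s' p', 0 <= fold_right Rplus 0 (map (fun k => v k ^ 2) (seq s' p'))).
{ clear. intros s' p'. revert s'. induction p' as [|p' IH']; intros s'; cbn [seq map fold_right]. lra.
  pose proof (IH' (S s')). pose proof (pow2_ge_0 (v s')). lra. }
destruct (Nat.eq_dec k s) as [->|hne].
- pose proof (hnn (S s) p). lra.
- pose proof (IH (S s) ltac:(lia)). pose proof (pow2_ge_0 (v s)). lra. Qed.

Lemma sumsq_le (v : nat -> R) B s p : (forall k, (s <= k < s + p)%nat -> Rabs (v k) <= B) ->
  fold_right Rplus 0 (map (fun k => v k ^ 2) (seq s p)) <= INR p * B ^ 2.
Proof. revert s. induction p as [|p IH]; intros s hk. simpl. lra.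
cbn [seq map fold_right].
pose proof (IH (S s) (fun k hk' => hk k ltac:(lia))).
pose proof (hk s ltac:(lia)). pose proof (Rabs_pos (v s)).
assert (v s ^ 2 <= B ^ 2). { rewrite <- (pow2_abs (v s)). nra. }
rewrite S_INR. lra. Qed.

Lemma vnorm_ge p v k : (k < p)%nat -> Rabs (v k) <= vnorm p v.
Proof. intros hk. unfold vnorm. rewrite <- sqrt_Rsqr_abs. apply sqrt_le_1_alt.
unfold Rsqr. replace (v k * v k) with (v k ^ 2) by ring. apply sumsq_ge. lia. Qed.

Lemma vnorm_le p v B : 0 <= B -> (forall k, (k < p)%nat -> Rabs (v k) <= B) -> vnorm p v <= INR p * B.
Proof. intros hB hk. unfold vnorm. eapply Rle_trans. apply sqrt_le_1_alt.
apply (sumsq_le v B 0 p). intros k hk'. apply hk. lia.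
rewrite <- (sqrt_square (INR p * B)) by (apply Rmult_le_pos; [apply pos_INR|lra]).
apply sqrt_le_1_alt. pose proof (pos_INR p).
destruct p as [|p]. simpl. lra. rewrite S_INR in *. pose proof (pos_INR p).
assert (INR p + 1 <= (INR p + 1) * (INR p + 1)) by nra.
assert (0 <= B * B) by nra. nra. Qed.

Lemma Fhyp_of (p : nat) (zeta dzeta : nat -> R -> R) (K l : R) k : (k < p)%nat ->
  (forall k x, (k < p)%nat -> 0 < x < PI ->
     is_derive (zeta k) x (dzeta k x) /\ continuous (dzeta k) x) ->
  (forall k, (k < p)%nat -> filterlim (zeta k) (at_left PI) (locally (zeta k PI))) ->
  (forall x, 0 < x <= PI ->
     vnorm p (fun k => zeta k x) <= K * pw (Rabs (ln x)) l) ->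
  (forall x, 0 < x < PI ->
     vnorm p (fun k => dzeta k x) <= K / x * pw (Rabs (ln x)) (l - 1)) ->
  Fhyp K l (fun x => zeta k (Rmin x PI)) (dzeta k).
Proof. intros hk Hd Hpi Hb Hdb. pose proof PI_RGT_0.
set (f := zeta k). set (F := fun x => f (Rmin x PI)).
assert (hloc : forall x, x < PI -> locally x (fun t => f t = F t)).
{ intros x hx. exists (mkposreal (PI - x) ltac:(lra)). intros t ht.
  change (Rabs (t - x) < PI - x) in ht. apply Rabs_lt_between in ht.
  unfold F. rewrite Rmin_left by lra. reflexivity. }
split; [|split; [|split]].
- intros x hx. destruct (Rlt_dec x PI) as [h1|h1].
  + apply (continuous_ext_loc F f x (hloc x h1)).
    apply (ex_derive_continuous (K:=R_AbsRing) (V:=R_NormedModule)).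
    exists (dzeta k x). apply (Hd k x hk). lra.
  + destruct (Rlt_dec PI x) as [h2|h2].
    * apply (continuous_ext_loc F (fun _ => f PI) x).
      exists (mkposreal (x - PI) ltac:(lra)). intros t ht.
      change (Rabs (t - x) < x - PI) in ht. apply Rabs_lt_between in ht.
      unfold F. rewrite Rmin_right by lra. reflexivity.
      apply continuous_const.
    * assert (x = PI) by lra. subst x.
      intros P [eps HP]. unfold filtermap.
      pose proof (Hpi k hk) as hl. 
      destruct (hl (ball (f PI) eps) (locally_ball _ _)) as [d hd].
      exists d. intros y hy. apply HP. unfold F. rewrite (Rmin_left PI PI) by lra.
      destruct (Rlt_dec y PI) as [hy1|hy1].
      -- rewrite Rmin_left by lra. apply hd; auto.
      -- rewrite Rmin_right by lra. apply ball_center.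
- intros x hx. apply (is_derive_ext_loc f F x _ (hloc x ltac:(lra))). apply (Hd k x hk hx).
- intros x hx. unfold F. rewrite Rmin_left by lra. eapply Rle_trans.
  apply (vnorm_ge p (fun k => zeta k x) k hk). apply Hb; auto.
- intros x hx. eapply Rle_trans.
  apply (vnorm_ge p (fun k => dzeta k x) k hk). apply Hdb; auto.
Qed.

Lemma K_nonneg p zeta K l : (forall x, 0 < x <= PI ->
     vnorm p (fun k => zeta k x) <= K * pw (Rabs (ln x)) l) -> 0 <= K.
Proof. intros Hb. pose proof PI_RGT_0. pose proof PI2_1.
specialize (Hb (1/2) ltac:(lra)).
assert (hln : ln (1/2) < 0) by (apply ln_neg; lra).
rewrite pw_pos_eq in Hb by (apply Rabs_pos_lt; lra).
assert (0 < Rpower (Rabs (ln (1/2))) l) by (unfold Rpower; apply exp_pos).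
assert (0 <= vnorm p (fun k => zeta k (1/2))) by (unfold vnorm; apply sqrt_pos).
nra. Qed.

Theorem lemma1 (p : nat) (zeta dzeta : nat -> R -> R) (K l : R) :
  1 <= l ->
  (forall k x, (k < p)%nat -> 0 < x < PI ->
     is_derive (zeta k) x (dzeta k x) /\ continuous (dzeta k) x) ->
  (forall k, (k < p)%nat -> filterlim (zeta k) (at_left PI) (locally (zeta k PI))) ->
  (forall x, 0 < x <= PI ->
     vnorm p (fun k => zeta k x) <= K * pw (Rabs (ln x)) l) ->
  (forall x, 0 < x < PI ->
     vnorm p (fun k => dzeta k x) <= K / x * pw (Rabs (ln x)) (l - 1)) ->
  exists K' : R, exists T0 : nat, forall T : nat, (T0 <= T)%nat ->
    forall lam : R, 0 <= lam <= PI ->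
      vnorm p (fun k =>
          / INR (Ttil T) * sum_n_m (fun j => zeta k (lamj T j)) 1 (nsum T lam)
          - / PI * impint (zeta k) lam)
      <= K' * pw (ln (INR (Ttil T))) l / INR (Ttil T).
Proof. intros hl Hd Hpi Hb Hdb.
pose proof (K_nonneg p zeta K l Hb) as hK.
pose proof PI_RGT_0 as hpi. pose proof (exp_pos (2*l)) as he.
set (r0 := PI * exp (2*l) + 9).
set (N0 := Z.to_nat (up r0)).
exists (INR p * (7 * K * Rpower 2 l)), (2 * N0)%nat.
intros T hT lam hlam.
assert (hN0 : r0 <= INR N0).
{ destruct (archimed r0) as [a1 a2]. unfold N0.
  assert (hz : (0 <= up r0)%Z). { assert (0 < IZR (up r0)) by (unfold r0 in *; nra).
    apply le_IZR. lra. }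
  rewrite INR_IZR_INZ, Z2Nat.id by exact hz. lra. }
assert (hTT : (N0 <= Ttil T)%nat).
{ unfold Ttil. replace N0 with ((N0 * 2) / 2)%nat at 1 by (apply Nat.div_mul; lia).
  apply Nat.Div0.div_le_mono. lia. }
set (Nr := INR (Ttil T)).
assert (hNr : r0 <= Nr) by (unfold Nr; apply le_INR in hTT; lra).
assert (hNr9 : 9 <= Nr) by (unfold r0 in *; nra).
assert (hlnN : 2 <= ln Nr) by (eapply Rle_trans; [apply ln9| apply ln_le; lra]).
set (Q := K * Rpower (2 * ln Nr) l).
assert (hQ : 0 <= 7 * Q / Nr).
{ unfold Q, Rpower. pose proof (exp_pos (l * ln (2 * ln Nr))).
  apply Rmult_le_pos. nra. left; apply Rinv_0_lt_compat; lra. }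
assert (hfin : INR p * (7 * Q / Nr) = INR p * (7 * K * Rpower 2 l) * pw (ln Nr) l / Nr).
{ rewrite pw_pos_eq by lra. unfold Q. rewrite <- Rpower_mult_distr by lra. field. lra. }
fold Nr. rewrite <- hfin.
apply vnorm_le. exact hQ.
intros k hk.
pose proof (Fhyp_of p zeta dzeta K l k hk Hd Hpi Hb Hdb) as HF.
set (F := fun x => zeta k (Rmin x PI)) in HF.
pose proof (coreF K l F (dzeta k) T lam hK hl HF ltac:(fold Nr r0; lra) hlam) as hc.
fold Nr Q in hc.
pose proof (nsum_prop T lam hlam) as hns. fold Nr in hns.
destruct (T_split T) as [r [hr hTs]].
assert (hTpos : 2 * Nr <= INR T).
{ rewrite hTs at 1. rewrite plus_INR, mult_INR. fold Nr. pose proof (pos_INR r). simpl. lra. }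
assert (hsum : sum_n_m (fun j => zeta k (lamj T j)) 1 (nsum T lam) =
               sum_n_m (fun j => F (lamj T j)) 1 (nsum T lam)).
{ apply sum_n_m_ext_loc. intros j hj. unfold F. rewrite Rmin_left. reflexivity.
  assert (hjn : INR j <= Nr).
  { destruct hj as [_ hj']. 
    assert (Nr * lam / PI <= Nr). { apply Rmult_le_reg_r with PI. lra. field_simplify; try lra; try nra. }
    apply le_INR in hj'. lra. }
  unfold lamj. apply Rmult_le_reg_r with (INR T). lra. field_simplify; try lra.
  assert (0 <= INR j) by apply pos_INR. nra. }
assert (himp : impint (zeta k) lam = impint F lam).
{ destruct (Req_dec lam 0) as [h0|h0].
  - subst lam. unfold impint. destruct (Req_EM_T 0 0); [reflexivity|lra].
  - apply impint_val. lra.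
    apply (is_RInt_gen_ext F). 
    + apply Filter_prod with (Q := fun a => 0 < a < lam) (R := fun b => b = lam).
      * apply at_right0_intro with lam; auto. lra.
      * reflexivity.
      * intros a b ha hb x hx. simpl in hx. subst b. rewrite Rmin_left in hx by lra.
        rewrite Rmax_right in hx by lra. unfold F. rewrite Rmin_left by lra. reflexivity.
    + apply (I_is K l F (dzeta k)); auto. lra. }
rewrite hsum, himp. exact hc.
Qed.
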